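(* Let $k$ be an integer. (1) Any root quadruple $\mathbf a=(a,b,c,d)$ with $Q_{\mathcal D}(\mathbf a)=k$, $a\le b\le c\le d$ and $L(\mathbf a)>0$ satisfies $0\le b\le c\le d$; moreover, if $k>0$ then $a<0$, and if $k\le0$ then $a\le\sqrt{|k|}$. (2) For each pair of integers $(k,-n)$ there are only finitely many root quadruples $\mathbf a=(a,b,c,d)$, $a\le b\le c\le d$, with $Q_{\mathcal D}(\mathbf a)=k$ and $a=-n$, except for the pairs $(k,-n)=(4l^2,-l)$ with $l\ge0$; for each such exceptional pair there is an infinite family of root quadruples $\{(-l,l,c,c):c\ge\max(l,1)\}$.
   Context: $Q_{\mathcal D}(a,b,c,d)=2(a^2+b^2+c^2+d^2)-(a+b+c+d)^2$, $L(\mathbf a)=a+b+c+d$, $|\mathbf a|=|a|+|b|+|c|+|d|$. $\mathbf S_i$ ($i=1,\dots,4$) is the integer matrix replacing the $i$-th coordinate $a_i$ of a quadruple by $2\sum_{j\ne i}a_j-a_i$, other coordinates fixed. An integer quadruple is reduced if no $\mathbf S_i$ strictly decreases $|\cdot|$. A reduced quadruple ordered as $a\le b\le c\le d$ with $L\ge 0$ is a root quadruple if $a+b+c\ge d>0$; a reduced quadruple with $L<0$ is a root quadruple if $(-d,-c,-b,-a)$ is one. *)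

(* Defs.v *)
From Stdlib Require Import ZArith Reals List.
Open Scope Z_scope.

Record quad := Quad { q1 : Z; q2 : Z; q3 : Z; q4 : Z }.

Definition QD (q : quad) : Z :=
  2 * (q1 q ^ 2 + q2 q ^ 2 + q3 q ^ 2 + q4 q ^ 2)
  - (q1 q + q2 q + q3 q + q4 q) ^ 2.

Definition Lsum (q : quad) : Z := q1 q + q2 q + q3 q + q4 q.

Definition qnorm (q : quad) : Z :=
  Z.abs (q1 q) + Z.abs (q2 q) + Z.abs (q3 q) + Z.abs (q4 q).

Definition S1 (q : quad) : quad :=
  Quad (2 * (q2 q + q3 q + q4 q) - q1 q) (q2 q) (q3 q) (q4 q).
Definition S2 (q : quad) : quad :=
  Quad (q1 q) (2 * (q1 q + q3 q + q4 q) - q2 q) (q3 q) (q4 q).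
Definition S3 (q : quad) : quad :=
  Quad (q1 q) (q2 q) (2 * (q1 q + q2 q + q4 q) - q3 q) (q4 q).
Definition S4 (q : quad) : quad :=
  Quad (q1 q) (q2 q) (q3 q) (2 * (q1 q + q2 q + q3 q) - q4 q).

Definition reduced (q : quad) : Prop :=
  ~ (qnorm (S1 q) < qnorm q) /\ ~ (qnorm (S2 q) < qnorm q) /\
  ~ (qnorm (S3 q) < qnorm q) /\ ~ (qnorm (S4 q) < qnorm q).

Definition sorted_quad (q : quad) : Prop :=
  q1 q <= q2 q /\ q2 q <= q3 q /\ q3 q <= q4 q.

Definition neg_rev (q : quad) : quad :=
  Quad (- q4 q) (- q3 q) (- q2 q) (- q1 q).

Definition root_nonneg (q : quad) : Prop :=
  sorted_quad q /\ reduced q /\ 0 <= Lsum q /\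
  q1 q + q2 q + q3 q >= q4 q /\ q4 q > 0.

Definition root_quad (q : quad) : Prop :=
  sorted_quad q /\ reduced q /\
  ((0 <= Lsum q /\ root_nonneg q) \/ (Lsum q < 0 /\ root_nonneg (neg_rev q))).

(* Main.v *)
Require Import Defs.
From Stdlib Require Import ZArith Reals List Lia.
Open Scope Z_scope.
Lemma qd_id a b c d : 2 * (a ^ 2 + b ^ 2 + c ^ 2 + d ^ 2) - (a + b + c + d) ^ 2
  = ((a-b)^2 - 4*c*(a+b)) + (d-c)*(d+c-2*(a+b+c)).
Proof. ring. Qed.
Lemma fc a b c d k : c <= d -> d <= a+b+c ->
  2 * (a ^ 2 + b ^ 2 + c ^ 2 + d ^ 2) - (a + b + c + d) ^ 2 = k ->
  4*c*(a+b) + (d-c)*(d-c) <= (a-b)^2 - k.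
Proof. intros H1 H2 H. rewrite qd_id in H.
 assert ((d-c)*(a+b+c-d) >= 0) by (apply Z.le_ge, Z.mul_nonneg_nonneg; lia). nia. Qed.
Lemma L1 n b A K : 0 <= b -> 1 <= -n+b -> n <= A -> -n <= A -> A*A = n*n -> 0 <= K ->
  4*b*(-n+b) <= (-n-b)^2 + K -> b <= 3*A+K+1.
Proof. intros.
 destruct (Z_le_gt_dec b (3*A + K + 1)) as [|Hg]; auto. exfalso.
 assert (b*n <= b*A) by (apply Z.mul_le_mono_nonneg_l; lia).
 assert ((-n-b)^2 = n*n + 2*(b*n) + b*b) by ring.
 assert (4*b*(-n+b) = 4*(b*b) - 4*(b*n)) by ring.
 assert (b * (A + K + 2) <= b * (b - 2*A)) by (apply Z.mul_le_mono_nonneg_l; lia).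
 assert ((3*A+K+2) * (A + K + 2) <= b * (A + K + 2)) by (apply Z.mul_le_mono_nonneg_r; lia).
 assert ((3*A+K+2) * (A + K + 2) = 3*(A*A) + 4*(A*K) + 8*A + K*K + 4*K + 4) by ring.
 assert (0 <= A*A) by (apply Z.mul_nonneg_nonneg; lia).
 assert (0 <= A*K) by (apply Z.mul_nonneg_nonneg; lia).
 assert (0 <= K*K) by (apply Z.mul_nonneg_nonneg; lia).
 assert (b*(b-2*A) = b*b - 2*(b*A)) by ring.
 assert (b*(A+K+2) = b*A + b*K + 2*b) by ring.
 clear Hg H1.
 lia. Qed.
Lemma L2 n b c A K : 0 <= c -> 0 <= b -> 1 <= -n+b -> n <= A -> -n <= A -> A*A = n*n ->
  4*c*(-n+b) <= (-n-b)^2 + K -> c <= (A+b)^2 + K.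
Proof. intros.
 assert (c*1 <= c*(-n+b)) by (apply Z.mul_le_mono_nonneg_l; lia).
 assert (b*n <= b*A) by (apply Z.mul_le_mono_nonneg_l; lia).
 assert (b*(-n) <= b*A) by (apply Z.mul_le_mono_nonneg_l; lia).
 assert ((-n-b)^2 = n*n + 2*(b*n) + b*b) by ring.
 assert ((A+b)^2 = A*A + 2*(b*A) + b*b) by ring.
 assert (b*(-n) = - (b*n)) by ring.
 assert (4*c*(-n+b) = 4*(c*(-n+b))) by ring.
 lia. Qed.
Lemma L3 n b c d : c <= d -> d <= -n+b+c -> -n+b = 0 ->
  2 * ((-n) ^ 2 + b ^ 2 + c ^ 2 + d ^ 2) - (-n + b + c + d) ^ 2 = 4*n^2.
Proof. intros. assert (d = c) by lia. assert (b = n) by lia. subst. ring. Qed.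
Lemma bnd n b c d k : -n <= b -> 0 <= b -> b <= c -> c <= d -> d <= -n+b+c ->
  2 * ((-n) ^ 2 + b ^ 2 + c ^ 2 + d ^ 2) - (-n + b + c + d) ^ 2 = k ->
  ~ (0 <= n /\ k = 4 * n^2) ->
  d <= (4*Z.abs n + Z.abs k + 2)^2.
Proof. intros H H0 H1 H2 H3 H4 H5. pose proof (fc _ _ _ _ _ H2 H3 H4) as F.
 destruct (Z.eq_dec b n) as [E|E].
 - exfalso. apply H5. split. lia. rewrite <- H4. apply L3; lia.
 - assert (1 <= -n + b) by lia.
   assert (4*b*(-n+b) <= 4*c*(-n+b)) by (apply Z.mul_le_mono_nonneg_r; lia).
   assert (0 <= (d-c)*(d-c)) by (apply Z.mul_nonneg_nonneg; lia).
   assert (Hc : 4*c*(-n+b) <= (-n-b)^2 + Z.abs k) by lia.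
   clear H4 H5 F.
   set (A := Z.abs n) in *. set (K := Z.abs k) in *.
   assert (HA: -n <= A /\ n <= A /\ 0 <= A) by (unfold A; lia).
   assert (HK: 0 <= K) by (unfold K; lia).
   assert (HAA : A*A = n*n) by (unfold A; apply Z.abs_square).
   clearbody A K.
   assert (b <= 3*A + K + 1) by (apply (L1 n b A K); lia).
   assert (c <= (A + b)^2 + K) by (apply (L2 n b c A K); lia).
   assert ((A + b)^2 <= (4*A + K + 1)^2) by (apply Z.pow_le_mono_l; lia).
   assert ((4*A + K + 2)^2 = (4*A + K + 1)^2 + 2*(4*A+K+1) + 1) by ring.
   lia.
Qed.
Lemma p1 a b c d : 0 <= a -> a <= b -> b <= c -> c <= d -> d <= a+b+c ->
  2 * (a ^ 2 + b ^ 2 + c ^ 2 + d ^ 2) - (a + b + c + d) ^ 2 <= 0.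
Proof. intros. rewrite qd_id.
 assert ((d-c)*(d+c-2*(a+b+c)) <= 0) by (apply Z.mul_nonneg_nonpos; lia).
 assert (0 <= a*(2*b-a)) by (apply Z.mul_nonneg_nonneg; lia).
 assert (b*b <= c*b) by (apply Z.mul_le_mono_nonneg_r; lia).
 assert (0 <= c*a) by (apply Z.mul_nonneg_nonneg; lia).
 assert (0 <= b*b) by (apply Z.mul_nonneg_nonneg; lia).
 assert ((a-b)^2 = b*b - a*(2*b-a)) by ring.
 assert (4*c*(a+b) = 4*(c*a) + 4*(c*b)) by ring. lia. Qed.
Lemma p2 a b c d : 0 < a -> a <= b -> b <= c -> c <= d -> d <= a+b+c ->
  a^2 <= - (2 * (a ^ 2 + b ^ 2 + c ^ 2 + d ^ 2) - (a + b + c + d) ^ 2).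
Proof. intros. rewrite qd_id.
 assert ((d-c)*(d+c-2*(a+b+c)) <= 0) by (apply Z.mul_nonneg_nonpos; lia).
 assert (b*b <= c*b) by (apply Z.mul_le_mono_nonneg_r; lia).
 assert (a*a <= c*a) by (apply Z.mul_le_mono_nonneg_r; lia).
 assert (0 <= a*b) by (apply Z.mul_nonneg_nonneg; lia).
 assert (0 <= a*a) by (apply Z.mul_nonneg_nonneg; lia).
 assert (0 <= b*b) by (apply Z.mul_nonneg_nonneg; lia).
 assert ((a-b)^2 = a*a - 2*(a*b) + b*b) by ring.
 assert (a^2 = a*a) by ring.
 assert (4*c*(a+b) = 4*(c*a) + 4*(c*b)) by ring. lia. Qed.

Definition rng (M : Z) : list Z :=
  map (fun i => Z.of_nat i - M) (seq 0 (Z.to_nat (2*M+1))).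
Lemma in_rng M x : -M <= x <= M -> In x (rng M).
Proof. intros H. unfold rng. apply in_map_iff. exists (Z.to_nat (x + M)).
 split. rewrite Z2Nat.id; lia. apply in_seq. lia. Qed.

Theorem theorem3p3 (k : Z) :
  (* (1) *)
  (forall a b c d : Z,
     root_quad (Quad a b c d) -> QD (Quad a b c d) = k ->
     a <= b <= c /\ c <= d -> Lsum (Quad a b c d) > 0 ->
     (0 <= b /\ b <= c /\ c <= d) /\
     (k > 0 -> a < 0) /\
     (k <= 0 -> (IZR a <= sqrt (IZR (Z.abs k)))%R)) /\
  (* (2) *)
  (forall n : Z,
     (~ (exists l : Z, 0 <= l /\ k = 4 * l ^ 2 /\ n = l)) ->
     exists s : list quad,
       forall b c d : Z,
         root_quad (Quad (- n) b c d) -> (- n) <= b <= c /\ c <= d ->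
         QD (Quad (- n) b c d) = k -> In (Quad (- n) b c d) s) /\
  (forall l : Z, 0 <= l -> k = 4 * l ^ 2 ->
     forall c : Z, Z.max l 1 <= c ->
       root_quad (Quad (- l) l c c) /\ QD (Quad (- l) l c c) = k).
Proof.
split; [|split].
- intros a b c d [_ [_ R]] HQ Hs HL. unfold Lsum in HL; simpl in HL.
  destruct R as [[_ [_ [_ [_ [H1 H2]]]]]|[H _]]; [|unfold Lsum in H; simpl in H; lia].
  simpl in H1, H2. unfold QD in HQ; cbn [q1 q2 q3 q4] in HQ.
  split; [lia|split].
  + intros Hk. destruct (Z_lt_le_dec a 0); auto.
    assert (k <= 0) by (rewrite <- HQ; apply p1; lia). lia.
  + intros Hk. destruct (Z_le_gt_dec a 0).
    * apply Rle_trans with 0%R. apply IZR_le; lia. apply sqrt_pos.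
    * assert (a^2 <= - k) by (rewrite <- HQ; apply p2; lia). rewrite <- (sqrt_square (IZR a)) by (apply IZR_le; lia).
      apply sqrt_le_1_alt. rewrite <- mult_IZR. apply IZR_le. assert (a*a = a^2) by ring. lia.
- intros n Hn.
  exists (flat_map (fun b => flat_map (fun c => map (fun d => Quad (-n) b c d)
     (rng ((4*Z.abs n + Z.abs k + 2)^2))) (rng ((4*Z.abs n + Z.abs k + 2)^2)))
     (rng ((4*Z.abs n + Z.abs k + 2)^2))).
  intros b c d [_ [_ R]] Hs HQ.
  set (M := (4*Z.abs n + Z.abs k + 2)^2).
  assert (HM : Z.abs n <= M).
  { unfold M. assert (0 <= 4*Z.abs n + Z.abs k + 2) by lia. nia. }
  assert (Hb : -M <= b <= M /\ -M <= c <= M /\ -M <= d <= M).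
  { unfold Lsum in R; simpl in R.
    destruct R as [[_ [_ [_ [_ [H1 H2]]]]]|[_ [_ [_ [_ [H1 H2]]]]]]; simpl in H1, H2.
    - unfold QD in HQ; cbn [q1 q2 q3 q4] in HQ.
      assert (d <= M). { apply (bnd n b c d k); try lia. intros [? ?]. apply Hn. exists n. lia. }
      clear HQ Hn. lia.
    - clear HQ Hn. lia. }
  apply in_flat_map. exists b. split. apply in_rng; lia.
  apply in_flat_map. exists c. split. apply in_rng; lia.
  apply in_map. apply in_rng; lia.
- intros l Hl Hk c Hc. split.
  + assert (sorted_quad (Quad (-l) l c c)) by (unfold sorted_quad; simpl; lia).
    assert (reduced (Quad (-l) l c c)).
    { unfold reduced, qnorm, S1, S2, S3, S4; cbn [q1 q2 q3 q4].
      rewrite (Z.abs_neq (-l)), (Z.abs_eq l), (Z.abs_eq c) by lia.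
      repeat split; lia. }
    split; auto. split; auto. left. unfold Lsum; cbn [q1 q2 q3 q4]. split. lia.
    unfold root_nonneg; cbn [q1 q2 q3 q4]. split; [exact H|split; [exact H0|]]. unfold Lsum; cbn [q1 q2 q3 q4]. repeat split; lia.
  + unfold QD; cbn [q1 q2 q3 q4]. subst k. ring.
Qed.
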